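(* Let $M=M(\mathbb{1},\lambda,e,V)$ be the generic characteristic matrix of a $\mathbb{Z}^d$-periodic graph specialized at $z=\mathbb{1}=(1,\dots,1)$ (a symmetric $n\times n$ matrix). For any cycle cover $c$ of $[n]$ with $M_c\neq 0$, any monomial occurring in $M_c$ determines $c$: if a monomial (in $\lambda,e,V$) occurs in both $M_c$ and $M_{c'}$ for cycle covers $c,c'$ with $M_c,M_{c'}\neq 0$, then $c=c'$.
   Context: A $\mathbb{Z}^d$-periodic graph $\Gamma$ is a simple undirected graph of bounded degree with a free $\mathbb{Z}^d$-action by automorphisms, $(\alpha,v)\mapsto\alpha+v$, with finitely many vertex and edge orbits; $W$ is a set of orbit representatives of vertices, identified with $[n]=\{1,\dots,n\}$. The generic characteristic matrix is $M(z,\lambda,e,V)=\lambda I_n-H(z,e,V)$, where $H(z,e,V)$ has $(v,u)$ entry $\delta_{v,u}V(v)-\sum_{\alpha\in\mathbb{Z}^d: v\sim\alpha+u}e_{(v,\alpha+u)}z^\alpha$ with independent indeterminates $e$ (one per edge orbit, $e_{(u,v)}=e_{(v,u)}$) and $V(v)$ (one per $v\in W$). For $w\in S_n$, $|w|$ is the multigraph on $[n]$ with one edge $\{i,w(i)\}$ for each $i$ (fixed points give loops, 2-cycles give double edges); such a graph is a cycle cover of $[n]$. For a symmetric matrix $M=(f_{i,j})$ and a cycle cover $c$, $M_c$ denotes $M_w=f_{1,w(1)}\cdots f_{n,w(n)}$ for any $w$ with $|w|=c$ (this depends only on $c$). *)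

(* Defs.v *)
From HB Require Import structures.
From mathcomp Require Import all_boot all_order all_algebra all_fingroup.
From mathcomp Require Import mpoly.
Set Implicit Arguments. Unset Strict Implicit. Unset Printing Implicit Defensive.
Import GRing.Theory.
Local Open Scope ring_scope.

(* A Z^d-periodic graph with n vertex orbits W = 'I_n.  Vertices are
   identified with W x Z^d (the action being free with finitely many orbits),
   the vertex (u, beta) standing for beta + u.  The graph is given by a list
   of representatives of its (finitely many) edge orbits: representative k is
   (a, b, alpha), i.e. the edge {a, alpha + b}; its orbit is
   { {beta + a, beta + alpha + b} | beta in Z^d }.                         *)
Record PGraph (n d : nat) := {
  pg_m : nat;
  pg_rep : 'I_pg_m -> 'I_n * 'I_n * 'rV[int]_d;
  pg_noloop : forall k, ~ ((pg_rep k).1.1 = (pg_rep k).1.2 /\ (pg_rep k).2 = 0);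
  (* distinct representatives lie in distinct edge orbits (the orbit of
     (a,b,alpha) is also represented by (b,a,-alpha)) *)
  pg_distinct : forall k k', k <> k' ->
     pg_rep k' <> pg_rep k /\
     pg_rep k' <> ((pg_rep k).1.2, (pg_rep k).1.1, - (pg_rep k).2)
}.

Arguments pg_m {n d} p : rename.
Arguments pg_rep {n d} p _ : rename.

Definition pg_adj n d (G : PGraph n d) (x y : 'I_n * 'rV[int]_d) : Prop :=
  exists k, let: (a, b, al) := pg_rep G k in
    (x.1 = a /\ y.1 = b /\ y.2 - x.2 = al) \/
    (x.1 = b /\ y.1 = a /\ x.2 - y.2 = al).

(* Polynomial ring Z[lambda, e_1..e_m, V_1..V_n]. *)
Definition nvar n d (G : PGraph n d) : nat := (1 + pg_m G + n)%N.

Definition lamv n d (G : PGraph n d) : {mpoly int[nvar G]} :=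
  'X_(lshift n (@ord0 (pg_m G))).
Definition ev n d (G : PGraph n d) (k : 'I_(pg_m G)) : {mpoly int[nvar G]} :=
  'X_(lshift n (rshift 1 k)).
Arguments ev {n d} G k.
Definition Vv n d (G : PGraph n d) (i : 'I_n) : {mpoly int[nvar G]} :=
  'X_(rshift (1 + pg_m G) i).

(* The generic characteristic matrix M(z,lambda,e,V) = lambda I - H(z,e,V)
   specialized at z = 1:
     M_{v,u} = delta_{v,u} (lambda - V(v)) + sum_{alpha : v ~ alpha + u} e_{(v,alpha+u)}.
   The edges {v, alpha + u} (v,u in W) of the edge orbit represented by
   (a,b,alpha0) are exactly those with (v,u,alpha) = (a,b,alpha0) or
   (v,u,alpha) = (b,a,-alpha0) (these two are distinct, as alpha0 <> 0 when
   a = b), so at z = 1 the orbit contributes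
   ([v = a /\ u = b] + [v = b /\ u = a]) e_k  to the (v,u) entry. *)
Definition charmat1 n d (G : PGraph n d) : 'M[{mpoly int[nvar G]}]_n :=
  \matrix_(i, j)
    ((i == j)%:R * (lamv G - Vv G i) +
     \sum_(k < pg_m G)
        (((i == (pg_rep G k).1.1) && (j == (pg_rep G k).1.2))%:R +
         ((i == (pg_rep G k).1.2) && (j == (pg_rep G k).1.1))%:R) * ev G k).

(* |w| : the multigraph on [n] with one edge {i, w i} per i, encoded as the
   multiplicity of each unordered pair {x,y} (a loop for a fixed point,
   a double edge for a 2-cycle). *)
Definition cyc_cover n (w : 'S_n) : {ffun 'I_n * 'I_n -> nat} :=
  [ffun p => #|[pred i : 'I_n | ((i == p.1) && (w i == p.2))
                               || ((i == p.2) && (w i == p.1))]|].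

Definition Mperm (R : comNzRingType) n (A : 'M[R]_n) (w : 'S_n) : R :=
  \prod_(i < n) A i (w i).

Definition monom n d (G : PGraph n d) := 'X_{1.. nvar G}.

(* Main.v *)
Require Import Defs.
From HB Require Import structures.
From mathcomp Require Import all_boot all_order all_algebra all_fingroup.
From mathcomp Require Import mpoly.
From mathcomp Require Import zify.
Set Implicit Arguments. Unset Strict Implicit. Unset Printing Implicit Defensive.
Import GRing.Theory.
Local Open Scope ring_scope.

Section S.
Variables (n d : nat) (G : PGraph n d).
Local Notation N := (nvar G).
Definition lamI : 'I_N := lshift n (@ord0 (pg_m G)).
Definition eI (k : 'I_(pg_m G)) : 'I_N := lshift n (rshift 1 k).
Definition VI (i : 'I_n) : 'I_N := rshift (1 + pg_m G) i.
Definition cK k (i j : 'I_n) : bool :=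
  ((i == (pg_rep G k).1.1) && (j == (pg_rep G k).1.2)) ||
  ((i == (pg_rep G k).1.2) && (j == (pg_rep G k).1.1)).
Definition compat (i j : 'I_n) (v : 'I_N) : bool :=
  ((i == j) && ((v == lamI) || (v == VI i))) || [exists k, (v == eI k) && cK k i j].
Definition good (i j : 'I_n) (p : {mpoly int[N]}) :=
  forall m, m \in msupp p -> exists2 v, compat i j v & m = U_(v)%MM.

Lemma eI_inj : injective eI.
Proof. move=> k k' /(congr1 val) /= H; apply: val_inj => /=; lia. Qed.
Lemma eI_lam k : eI k != lamI.
Proof. apply/eqP => /(congr1 val) /=; lia. Qed.
Lemma eI_V k i : eI k != VI i.
Proof. apply/eqP => /(congr1 val) /=; have := ltn_ord k; lia. Qed.

Lemma good0 i j : good i j 0.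
Proof. by move=> m; rewrite mcoeff_msupp mcoeff0 eqxx. Qed.
Lemma goodD i j p q : good i j p -> good i j q -> good i j (p + q).
Proof. by move=> hp hq m /msuppD_le; rewrite mem_cat => /orP[/hp|/hq]. Qed.
Lemma goodB i j p q : good i j p -> good i j q -> good i j (p - q).
Proof. by move=> hp hq m /msuppB_le; rewrite mem_cat => /orP[/hp|/hq]. Qed.
Lemma goodX i j v : compat i j v -> good i j 'X_v.
Proof. by move=> h m; rewrite msuppX mem_seq1 => /eqP->; exists v. Qed.
Lemma goodC i j (b : bool) p : (b -> good i j p) -> good i j (b%:R * p).
Proof.
move=> h m; rewrite mcoeff_msupp mulr_natl mcoeffMn.
case: b h => h /=; first by rewrite mulr1n -mcoeff_msupp; exact: h.
by [].
Qed.
Lemma goodS i j (F : 'I_(pg_m G) -> {mpoly int[N]}) :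
  (forall k, good i j (F k)) -> good i j (\sum_k F k).
Proof. move=> h; apply: big_ind => //; [exact: good0 | exact: goodD]. Qed.

Lemma entry_good i j : good i j (charmat1 G i j).
Proof.
rewrite mxE; apply: goodD.
  apply: goodC => /eqP <-; apply: goodB; apply: goodX;
    by rewrite /compat eqxx ?eqxx ?orbT.
apply: goodS => k; rewrite mulrDl; apply: goodD; apply: goodC => h;
  apply: goodX; apply/orP; right; apply/existsP; exists k;
  by rewrite eqxx /cK h ?orbT.
Qed.

Lemma prod_supp (r : seq 'I_n) (F : 'I_n -> {mpoly int[N]}) (Q : 'I_n -> 'I_N -> bool) :
  uniq r -> (forall i m, m \in msupp (F i) -> exists2 v, Q i v & m = U_(v)%MM) ->
  forall m, m \in msupp (\prod_(i <- r) F i) ->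
  exists f : 'I_n -> 'I_N, (forall i, i \in r -> Q i (f i)) /\ m = (\sum_(i <- r) U_(f i))%MM.
Proof.
move=> ur hF; elim: r ur => [|x r IH] /=.
  move=> _ m; rewrite big_nil mcoeff_msupp mcoeff1.
  have [-> _|nm] := eqVneq m 0%MM; last by [].
  by exists (fun _ => lamI); rewrite big_nil.
case/andP=> xr ur m; rewrite big_cons => /msuppM_le /allpairsP [[m1 m2] /= [h1 h2 ->]].
have [v hv ->] := hF _ _ h1.
have [f [hf ->]] := IH ur _ h2.
exists (fun i => if i == x then v else f i); split.
  move=> i; rewrite inE; case: eqP => [-> //|_ /= /hf //].
rewrite big_cons eqxx; congr (_ + _)%MM.
apply: eq_big_seq => i ir; case: eqP => // ix; by move: xr; rewrite -ix ir.
Qed.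

Lemma pairA (T : eqType) (i wi a b x y : T) :
  ((i==a)&&(wi==b)||(i==b)&&(wi==a)) -> ((x==a)&&(y==b)||(x==b)&&(y==a)) ->
  ((i==x)&&(wi==y)||(i==y)&&(wi==x)).
Proof.
move=> /orP[/andP[/eqP? /eqP?]|/andP[/eqP? /eqP?]] /orP[/andP[/eqP? /eqP?]|/andP[/eqP? /eqP?]];
 subst; rewrite !eqxx ?orbT //.
Qed.
Lemma pairB (T : eqType) (i wi a b x y : T) :
  ((i==a)&&(wi==b)||(i==b)&&(wi==a)) -> ((i==x)&&(wi==y)||(i==y)&&(wi==x)) ->
  ((x==a)&&(y==b)||(x==b)&&(y==a)).
Proof.
move=> /orP[/andP[/eqP? /eqP?]|/andP[/eqP? /eqP?]] /orP[/andP[/eqP? /eqP?]|/andP[/eqP? /eqP?]];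
 subst; rewrite !eqxx ?orbT //.
Qed.
Lemma pairC (T : eqType) (i wi x y : T) :
  x != y -> ((i==x)&&(wi==y)||(i==y)&&(wi==x)) -> i != wi.
Proof.
move=> hxy /orP[/andP[/eqP? /eqP?]|/andP[/eqP? /eqP?]]; subst => //; by rewrite eq_sym.
Qed.

Lemma per_i x y i wi v : x != y -> compat i wi v ->
  (\sum_k (cK k x y && (v == eI k)))%N = ((i == x) && (wi == y) || (i == y) && (wi == x)).
Proof.
move=> hxy hc.
case: (pickP (fun k => v == eI k)) => [k0 /eqP hv | none].
  subst v; rewrite (bigD1 k0) //= eqxx andbT big1 ?addn0; last first.
    by move=> k nk; rewrite (inj_eq eI_inj) eq_sym (negbTE nk) andbF.
  move: hc; rewrite /compat (negbTE (eI_lam k0)) (negbTE (eI_V k0 i)) andbF /=.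
  move=> /existsP [k /andP [/eqP/eI_inj <- hc]].
  congr (nat_of_bool _); move: hc; rewrite /cK.
  move: ((pg_rep G k0).1.1) ((pg_rep G k0).1.2) => a b hc.
  apply/idP/idP; [exact: pairA | exact: pairB].
rewrite big1; last by move=> k _; rewrite (none k) andbF.
case E: (_ || _) => //; have hne := pairC hxy E.
move: hc; rewrite /compat (negbTE hne) /= => /existsP [k /andP [hk _]].
by rewrite none in hk.
Qed.

Lemma count_off (w : 'S_n) (f : 'I_n -> 'I_N) x y : x != y ->
  (forall i, compat i (w i) (f i)) ->
  cyc_cover w (x, y) = (\sum_k cK k x y * (\sum_i U_(f i))%MM (eI k))%N.
Proof.
move=> hxy hf; rewrite ffunE /=.
under eq_bigr => k _ do rewrite mnm_sumE big_distrr /=.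
rewrite exchange_big /= -sum1_card big_mkcond /=.
apply: eq_bigr => i _.
under eq_bigr => k _ do rewrite mnm1E mulnb.
by rewrite (per_i hxy (hf i)) inE; case: (_ || _).
Qed.

Lemma count_diag (w : 'S_n) x : cyc_cover w (x, x) = (w x == x).
Proof.
rewrite ffunE /= -sum1_card big_mkcond /= (bigD1 x) //= big1.
  by rewrite inE eqxx orbb addn0; case: (w x == x).
by move=> i /negbTE ix; rewrite inE ix.
Qed.

End S.

Lemma diag_transfer n (w w' : 'S_n) x :
  (forall x y, x != y -> cyc_cover w (x, y) = cyc_cover w' (x, y)) ->
  w x != x -> w' x != x.
Proof.
move=> hoff hx; set y := w x.
have hxy : x != y by rewrite eq_sym.
have : (0 < cyc_cover w (x, y))%N.
  by rewrite ffunE; apply/card_gt0P; exists x; rewrite inE /= !eqxx.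
rewrite hoff // ffunE => /card_gt0P [i]; rewrite inE /=.
case/orP => [/andP [/eqP -> /eqP ->]|/andP [/eqP -> /eqP h]]; first by rewrite eq_sym.
apply/eqP => h2; rewrite -h2 in h.
by rewrite (perm_inj h) eqxx in hxy.
Qed.

Unset Implicit Arguments.
Theorem lemma2p3 (n d : nat) (G : PGraph n d) (w w' : 'S_n)
  (m : monom G) :
  Mperm (charmat1 G) w != 0 ->
  Mperm (charmat1 G) w' != 0 ->
  m \in msupp (Mperm (charmat1 G) w) ->
  m \in msupp (Mperm (charmat1 G) w') ->
  cyc_cover w = cyc_cover w'.
Proof.
move=> _ _ hm hm'.
have [f [hf E]] := prod_supp (index_enum_uniq 'I_n)
   (fun i m (h : m \in msupp (charmat1 G i (w i))) => entry_good h) hm.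
have [g [hg E']] := prod_supp (index_enum_uniq 'I_n)
   (fun i m (h : m \in msupp (charmat1 G i (w' i))) => entry_good h) hm'.
have hf' : forall i, compat i (w i) (f i) by move=> i; apply: hf; rewrite mem_index_enum.
have hg' : forall i, compat i (w' i) (g i) by move=> i; apply: hg; rewrite mem_index_enum.
have hoff : forall x y, x != y -> cyc_cover w (x, y) = cyc_cover w' (x, y).
  move=> x y hxy; rewrite (count_off hxy hf') (count_off hxy hg').
  by rewrite -E -E'.
apply/ffunP => [[x y]].
have [<-|hxy] := eqVneq x y; last exact: hoff.
rewrite !count_diag; congr (nat_of_bool _); apply/idP/idP; apply: contraTT.
  by apply: diag_transfer => a b hab; rewrite hoff.
exact: diag_transfer.
Qed.
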